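(* For every $N\ge1$ and every pair of disjoint nonempty subsets $\mathscr A,\mathscr B$ of $E_N$, $$\mathrm{Cap}^s_N(\mathscr A,\mathscr B)\le\mathrm{Cap}_N(\mathscr A,\mathscr B)\le 4L^2\,\mathrm{Cap}^s_N(\mathscr A,\mathscr B).$$
   Context: Fix an integer $L\ge2$, $\mathbb T_L=\mathbb Z/L\mathbb Z$, $\alpha>0$, $a(0)=1$, $a(n)=n^\alpha$ ($n\ge1$), $g(0)=0$, $g(n)=a(n)/a(n-1)$ ($n\ge1$). $E_N=\{\eta\in\{0,1,\dots\}^{\mathbb T_L}:\sum_x\eta_x=N\}$; $\sigma^{x,y}\eta$ moves one particle from $x$ to $y$. Generator $(\mathcal LF)(\eta)=\sum_xg(\eta_x)[F(\sigma^{x,x+1}\eta)-F(\eta)]$; invariant measure $\mu_N(\eta)=W_N^{-1}\prod_xa(\eta_x)^{-1}$, $W_N=\sum_{\zeta\in E_N}\prod_xa(\zeta_x)^{-1}$. Dirichlet form $D_N(F)=\frac12\sum_x\sum_{\eta\in E_N}\mu_N(\eta)g(\eta_x)[F(\sigma^{x,x+1}\eta)-F(\eta)]^2$. For disjoint nonempty $\mathscr A,\mathscr B\subset E_N$: $V_{\mathscr A,\mathscr B}$ is the function equal to $1$ on $\mathscr A$, $0$ on $\mathscr B$, and $V(\eta)=\mathbf P_\eta[H_{\mathscr A}<H_{\mathscr B}]$ elsewhere (the unique function with these boundary values with $\mathcal LV=0$ off $\mathscr A\cup\mathscr B$); $\mathrm{Cap}_N(\mathscr A,\mathscr B)=D_N(V_{\mathscr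 A,\mathscr B})$. The symmetric capacity is $\mathrm{Cap}^s_N(\mathscr A,\mathscr B)=\inf\{D_N(F):F|_{\mathscr A}=1,\ F|_{\mathscr B}=0\}$ (capacity of the reversible process with generator $(\mathcal L+\mathcal L^* )/2$, $\mathcal L^*$ the $L^2(\mu_N)$-adjoint of $\mathcal L$). *)

(* Defs.v *)
From mathcomp Require Import all_boot.
From Stdlib Require Import Reals.

Set Implicit Arguments.
Unset Strict Implicit.
Unset Printing Implicit Defensive.

(* Configurations on T_L = 'I_L with at most N particles per site; the
   state space E_N is the subset with total particle number N. *)
Definition cfg (L N : nat) : finType := {ffun 'I_L -> 'I_N.+1}.

Definition inEN (L N : nat) (eta : cfg L N) : bool :=
  (\sum_(x < L) (eta x : nat) == N)%N.

Definition Rsum (T : finType) (P : pred T) (F : T -> R) : R :=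
  \big[Rplus/0%R]_(t | P t) F t.

Definition succ (L : nat) (x : 'I_L) : 'I_L := ordS x.

(* sigma^{x,y} eta : move one particle from x to y (identity if eta_x = 0,
   a case that never contributes since g(0) = 0) *)
Definition sigma (L N : nat) (x y : 'I_L) (eta : cfg L N) : cfg L N :=
  if (eta x : nat) == 0%N then eta
  else [ffun z => inord (((eta z : nat) - (z == x)) + (z == y))%N].

Definition a (alpha : R) (n : nat) : R :=
  match n with O => 1%R | _ => Rpower (INR n) alpha end.

Definition g (alpha : R) (n : nat) : R :=
  match n with O => 0%R | S m => (a alpha n / a alpha m)%R end.

Definition weight (L N : nat) (alpha : R) (eta : cfg L N) : R :=
  (/ \big[Rmult/1%R]_(x < L) a alpha (eta x))%R.

Definition WN (L N : nat) (alpha : R) : R :=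
  Rsum (@inEN L N) (weight alpha).

Definition mu (L N : nat) (alpha : R) (eta : cfg L N) : R :=
  (weight alpha eta / WN L N alpha)%R.

Definition gen (L N : nat) (alpha : R) (F : cfg L N -> R) (eta : cfg L N) : R :=
  Rsum (fun _ : 'I_L => true)
    (fun x => (g alpha (eta x) * (F (sigma x (succ x) eta) - F eta))%R).

Definition Dir (L N : nat) (alpha : R) (F : cfg L N -> R) : R :=
  (/ 2 * Rsum (fun _ : 'I_L => true) (fun x =>
      Rsum (@inEN L N) (fun eta =>
        mu alpha eta * g alpha (eta x) * (F (sigma x (succ x) eta) - F eta) ^ 2)))%R.

Definition eq_potential (L N : nat) (alpha : R) (A B : {set cfg L N})
    (V : cfg L N -> R) : Prop :=
  (forall eta, eta \in A -> V eta = 1%R) /\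
  (forall eta, eta \in B -> V eta = 0%R) /\
  (forall eta, inEN eta -> eta \notin A -> eta \notin B -> gen alpha V eta = 0%R).

Definition is_Cap (L N : nat) (alpha : R) (A B : {set cfg L N}) (c : R) : Prop :=
  exists V, eq_potential alpha A B V /\ c = Dir alpha V.

Definition is_inf (S : R -> Prop) (c : R) : Prop :=
  (forall x, S x -> (c <= x)%R) /\
  (forall c', (forall x, S x -> (c' <= x)%R) -> (c' <= c)%R).

Definition is_Caps (L N : nat) (alpha : R) (A B : {set cfg L N}) (c : R) : Prop :=
  is_inf (fun d => exists F : cfg L N -> R,
            (forall eta, eta \in A -> F eta = 1%R) /\
            (forall eta, eta \in B -> F eta = 0%R) /\
            d = Dir alpha F) c.

(* Main.v *)
Require Import Defs.
From mathcomp Require Import all_boot all_algebra.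
From mathcomp Require Import Rstruct.
From mathcomp Require Import zify.
From Stdlib Require Import Reals Lra.
Ltac genord := repeat match goal with
  | H : context [@nat_of_ord _ ?t] |- _ =>
      revert H
  end;
  repeat match goal with
  | |- context [@nat_of_ord ?n ?t] =>
      let k := fresh "k" in have := ltn_ord t; set k := (@nat_of_ord n t); clearbody k
  end.
Ltac nlia := genord; lia.

Set Implicit Arguments.
Unset Strict Implicit.
Unset Printing Implicit Defensive.

Section S.
Variables (L N : nat).
Implicit Types (eta : cfg L N) (x y z w : 'I_L).

Lemma two_le_sum eta x z : z != x -> (eta z + eta x <= \sum_(v < L) (eta v : nat))%N.
Proof.
move=> zx; rewrite (bigD1 x) //= (bigD1 z) //=.
nlia.
Qed.

Lemma sigmaE eta x y : inEN eta -> (eta x : nat) != 0%N -> forall z,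
  (Defs.sigma x y eta z : nat) = (eta z - (z == x) + (z == y))%N.
Proof.
move=> /eqP hs hx z; rewrite /Defs.sigma (negbTE hx) ffunE inordK //.
have hz := ltn_ord (eta z).
case: (eqVneq z y) => [?|zy]; first subst z.
  case: (eqVneq y x) => [?|yx]; first by subst y; rewrite ?eqxx /=; nlia.
  have := two_le_sum eta yx; rewrite hs /= ?(negbTE yx) ?eqxx; nlia.
by rewrite /=; nlia.
Qed.

Lemma sum_ind x : (\sum_(z < L) ((z == x) : nat) = 1)%N.
Proof. by rewrite (bigD1 x) //= big1 ?eqxx // => i /negbTE ->. Qed.

Lemma sum_minus eta x : (eta x : nat) != 0%N ->
  (\sum_(z < L) ((eta z : nat) - (z == x)) + 1 = \sum_(z < L) (eta z : nat))%N.
Proof.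
move=> hx; rewrite (bigD1 x) //= [in RHS](bigD1 x) //= eqxx.
rewrite (eq_bigr (fun z => eta z : nat)); last by move=> i /negbTE ->; rewrite subn0.
rewrite /=; nlia.
Qed.

Lemma sigma_inEN eta x y : inEN eta -> (eta x : nat) != 0%N -> inEN (Defs.sigma x y eta).
Proof.
move=> he hx; have hs := he; move/eqP: hs => hs.
rewrite /inEN; apply/eqP.
rewrite (eq_bigr (fun z => (eta z - (z == x)) + (z == y))%N); last by move=> z _; rewrite sigmaE.
by rewrite big_split /= sum_ind sum_minus.
Qed.

Lemma sigma_nz eta x y : inEN eta -> (eta x : nat) != 0%N -> (Defs.sigma x y eta y : nat) != 0%N.
Proof. move=> he hx; rewrite sigmaE // eqxx; nlia. Qed.

Lemma sigma_comp eta x y w : inEN eta -> (eta x : nat) != 0%N ->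
  Defs.sigma y w (Defs.sigma x y eta) = Defs.sigma x w eta.
Proof.
move=> he hx; apply/ffunP => z; apply: val_inj => /=.
rewrite sigmaE ?sigma_inEN ?sigma_nz // !sigmaE //.
case: (z == y); rewrite ?addnK //.
Qed.

Lemma sigma_id eta x : inEN eta -> Defs.sigma x x eta = eta.
Proof.
move=> he; case: (eqVneq (eta x : nat) 0%N) => hx.
  by rewrite /Defs.sigma hx eqxx.
apply/ffunP => z; apply: val_inj => /=; rewrite sigmaE //.
case: (eqVneq z x) => [->|]; rewrite /=; nlia.
Qed.


Hypothesis hL : (1 < L)%N.

Lemma succ_neq x : succ x != x.
Proof.
apply/eqP => /(congr1 val) /=; have := ltn_ord x.
case: (ltnP x.+1 L) => h.
  by rewrite modn_small //; nlia.
have -> : x.+1 = L by nlia.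
rewrite modnn; nlia.
Qed.

Lemma pred_neq x : ord_pred x != x.
Proof.
apply/eqP => h; have := succ_neq (ord_pred x); rewrite /succ ord_predK h eqxx //.
Qed.

Lemma iter_succ k x : (val (iter k (@succ L) x) = (x + k) %% L)%N.
Proof.
elim: k => [|k IH] /=; first by rewrite addn0 modn_small.
by rewrite IH -addn1 modnDml addn1 addnS.
Qed.

Lemma iter_succL x : iter L (@succ L) x = x.
Proof. by apply: val_inj; rewrite iter_succ modnDr modn_small. Qed.

Definition Pe (e : 'I_L * cfg L N) : bool := inEN e.2 && ((e.2 e.1 : nat) != 0%N).
Definition Tm (e : 'I_L * cfg L N) := (succ e.1, Defs.sigma e.1 (succ e.1) e.2).
Definition Ti (e : 'I_L * cfg L N) := (ord_pred e.1, Defs.sigma e.1 (ord_pred e.1) e.2).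

Lemma PTm e : Pe e -> Pe (Tm e).
Proof. by case/andP => h1 h2; rewrite /Pe /= sigma_inEN // sigma_nz. Qed.

Lemma PTi e : Pe e -> Pe (Ti e).
Proof. by case/andP => h1 h2; rewrite /Pe /= sigma_inEN // sigma_nz. Qed.

Lemma TiTm e : Pe e -> Ti (Tm e) = e.
Proof.
case: e => x eta /andP [/= h1 h2]; rewrite /Ti /Tm /= /succ ordSK.
by rewrite sigma_comp // sigma_id.
Qed.

Lemma TmTi e : Pe e -> Tm (Ti e) = e.
Proof.
case: e => x eta /andP [/= h1 h2]; rewrite /Ti /Tm /= /succ ord_predK.
by rewrite sigma_comp // sigma_id.
Qed.

Lemma iterTm k e : Pe e -> iter k Tm e = (iter k (@succ L) e.1, Defs.sigma e.1 (iter k (@succ L) e.1) e.2).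
Proof.
case: e => x eta /andP [/= h1 h2]; elim: k => [|k IH] /=; first by rewrite sigma_id.
by rewrite IH /Tm /= sigma_comp.
Qed.

Lemma iterTmL e : Pe e -> iter L Tm e = e.
Proof.
move=> he; rewrite iterTm // iter_succL; case: e he => x eta /andP [/= h1 h2].
by rewrite sigma_id.
Qed.

Lemma P_iter k e : Pe e -> Pe (iter k Tm e).
Proof. by move=> he; elim: k => [|k IH] //=; apply: PTm. Qed.

End S.

Section R1.
Variables (L N : nat) (alpha : R).
Hypothesis hL : (1 < L)%nat.
Local Open Scope R_scope.

Lemma a_pos (n : nat) : 0 < a alpha n.
Proof. case: n => [|n] /=; [lra | rewrite /Rpower; apply: exp_pos]. Qed.

Lemma g_ge0 (n : nat) : 0 <= g alpha n.
Proof.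
case: n => [|n]; first by rewrite /g; lra.
change (g alpha n.+1) with (a alpha n.+1 / a alpha n).
apply: Rlt_le; apply: Rdiv_lt_0_compat; apply: a_pos.
Qed.

Lemma g_pos (n : nat) : (n != 0)%nat -> 0 < g alpha n.
Proof.
case: n => [|n] // _.
change (g alpha n.+1) with (a alpha n.+1 / a alpha n).
apply: Rdiv_lt_0_compat; apply: a_pos.
Qed.

Lemma prod_pos (eta : cfg L N) : 0 < \big[Rmult/1]_(x < L) a alpha (eta x).
Proof.
apply: (big_ind (fun v => 0 < v)); [lra | move=> u v hu hv; nra | move=> i _; apply: a_pos].
Qed.

Lemma weight_pos (eta : cfg L N) : 0 < weight alpha eta.
Proof. rewrite /weight; apply: Rinv_0_lt_compat; apply: prod_pos. Qed.

Lemma weight_rel (eta : cfg L N) (x : 'I_L) : inEN eta -> (eta x : nat) != 0%nat ->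
  weight alpha (Defs.sigma x (succ x) eta) * g alpha (Defs.sigma x (succ x) eta (succ x))
  = weight alpha eta * g alpha (eta x).
Proof.
move=> he hx.
have ny := succ_neq hL x.
rewrite /weight (bigD1 x) //= [in RHS](bigD1 x) //=.
rewrite (bigD1 (succ x)) //=.
rewrite [in RHS](bigD1 (succ x)) //=.
rewrite (eq_bigr (fun z => a alpha (eta z))); last first.
  move=> z /andP [zx zy]; congr (a alpha _); rewrite sigmaE // (negbTE zx) (negbTE zy) /=.
  by rewrite subn0 addn0.
rewrite !sigmaE // eqxx (negbTE ny) eq_sym (negbTE ny) /=.
set Q := \big[Rmult/1]_(i < L | _) _.
have hQ : 0 < Q.
  apply: (big_ind (fun v => 0 < v)); [lra | move=> u v hu hv; nra | move=> i _; apply: a_pos].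
move: hx; case: (eta x : nat) => [|m] // _.
have -> : (eta (succ x) - 0 + (succ x == succ x) = (eta (succ x)).+1)%nat by rewrite eqxx subn0 addn1.
have -> : (m.+1 - 1 + 0 = m)%nat by rewrite addn0 subn1.
set q := nat_of_ord (eta (succ x)).
change (g alpha q.+1) with (a alpha q.+1 / a alpha q).
change (g alpha m.+1) with (a alpha m.+1 / a alpha m).
have h1 := a_pos m; have h2 := a_pos m.+1; have h3 := a_pos q; have h4 := a_pos q.+1.
field; repeat split; apply: Rgt_not_eq; try nra.
Qed.

End R1.

Section R2.
Variables (L N : nat) (alpha : R).
Hypothesis hL : (1 < L)%nat.
Local Open Scope R_scope.
Hypothesis hWN : 0 < WN L N alpha.

Notation E := (cfg L N).
Notation Pe := (@Pe L N).
Notation Tm := (@Tm L N).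

Definition cw (e : 'I_L * E) := mu alpha e.2 * g alpha (e.2 e.1).
Definition ES (F : 'I_L * E -> R) := \big[Rplus/0]_(e | Pe e) (cw e * F e).
Definition grad (f : E -> R) (e : 'I_L * E) := f (Tm e).2 - f e.2.

Lemma mu_pos (eta : E) : 0 < mu alpha eta.
Proof. rewrite /mu /Rdiv; apply: Rmult_lt_0_compat; [apply: weight_pos | apply: Rinv_0_lt_compat; exact hWN]. Qed.

Lemma c_ge0 (e : 'I_L * E) : 0 <= cw e.
Proof. rewrite /cw; have := mu_pos e.2; have := g_ge0 alpha (e.2 e.1); nra. Qed.

Lemma c_pos (e : 'I_L * E) : Pe e -> 0 < cw e.
Proof.
case/andP => _ h; rewrite /cw; have := mu_pos e.2; have := g_pos alpha h; nra.
Qed.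

Lemma c_T (e : 'I_L * E) : Pe e -> cw (Tm e) = cw e.
Proof.
case: e => x eta /andP [/= h1 h2]; rewrite /cw /= /mu /Rdiv.
rewrite Rmult_assoc (Rmult_comm (/ _)) -Rmult_assoc (@weight_rel L N alpha hL) //.
by rewrite [RHS]Rmult_assoc [X in _ = _ * X]Rmult_comm -[RHS]Rmult_assoc.
Qed.

Lemma ES_T (F : 'I_L * E -> R) : ES (fun e => F (Tm e)) = ES F.
Proof.
rewrite /ES [RHS](reindex_onto Tm (@Ti L N)); last by move=> i hi; apply: TmTi.
apply: eq_big => [j | j hj].
  apply/idP/idP => [hj | /andP [h1 /eqP h2]].
    by rewrite PTm //= TiTm.
  by rewrite -h2; apply: PTi.
by rewrite c_T.
Qed.

Lemma ES_iter k (F : 'I_L * E -> R) : ES (fun e => F (iter k Tm e)) = ES F.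
Proof.
elim: k F => [|k IH] F; first by [].
rewrite -(IH F) -(ES_T (fun e => F (iter k Tm e))); apply: eq_bigr => e _.
by rewrite iterSr.
Qed.

Lemma ES_add (F1 F2 : 'I_L * E -> R) : ES (fun e => F1 e + F2 e) = ES F1 + ES F2.
Proof.
rewrite /ES -big_split /=; apply: eq_bigr => e _; ring.
Qed.

Lemma ES_scal k (F : 'I_L * E -> R) : ES (fun e => k * F e) = k * ES F.
Proof.
rewrite /ES big_distrr /=; apply: eq_bigr => e _; ring.
Qed.

Lemma ES_ext (F1 F2 : 'I_L * E -> R) : (forall e, Pe e -> F1 e = F2 e) -> ES F1 = ES F2.
Proof. by move=> h; apply: eq_bigr => e he; rewrite h. Qed.

Lemma ES_le (F1 F2 : 'I_L * E -> R) : (forall e, Pe e -> F1 e <= F2 e) -> ES F1 <= ES F2.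
Proof.
move=> h; rewrite /ES; apply: (big_ind2 (fun u v => u <= v)); first lra.
  move=> *; lra.
move=> e he; have := c_ge0 e; have := h e he; nra.
Qed.

Lemma ES_sum (n : nat) (F : nat -> 'I_L * E -> R) :
  ES (fun e => \big[Rplus/0]_(0 <= k < n) F k e) = \big[Rplus/0]_(0 <= k < n) ES (F k).
Proof.
rewrite /ES exchange_big /=; apply: eq_bigr => e _; rewrite big_distrr //.
Qed.

Lemma sum_to_ES (F : 'I_L -> E -> R) :
  (forall x (eta : E), (eta x : nat) = 0%nat -> F x eta = 0) ->
  \big[Rplus/0]_(x < L) \big[Rplus/0]_(eta | inEN eta) F x eta
  = \big[Rplus/0]_(e | Pe e) F e.1 e.2.
Proof.
move=> h0; rewrite pair_big_dep /= (bigID (fun e : 'I_L * E => (e.2 e.1 : nat) != 0%nat)) /=.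
rewrite [X in _ + X = _]big1 ?Rplus_0_r; last first.
  by move=> e /andP [_ /negbNE /eqP h]; apply: h0.
by apply: eq_bigl => e.
Qed.

Lemma Dir_ES (f : E -> R) : Dir alpha f = / 2 * ES (fun e => (grad f e) ^ 2).
Proof.
rewrite /Dir /Rsum sum_to_ES; last by move=> x eta h; rewrite h /=; ring.
by congr (_ * _); apply: eq_bigr => e _; rewrite /cw /grad /=; ring.
Qed.

Definition Sf (f h : E -> R) := ES (fun e => grad f e * h e.2).

Lemma gen_ES (f h : E -> R) :
  \big[Rplus/0]_(eta | inEN eta) (mu alpha eta * gen alpha f eta * h eta) = Sf f h.
Proof.
rewrite /Sf /ES.
transitivity (\big[Rplus/0]_(e | Pe e) (fun x eta => cw (x, eta) * (grad f (x, eta) * h eta)) e.1 e.2);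
  last by apply: eq_bigr => [[x eta]] _.
rewrite -(sum_to_ES (F := fun x eta => cw (x, eta) * (grad f (x, eta) * h eta))); last by move=> x eta hx; rewrite /cw /= hx /=; ring.
rewrite exchange_big /=; apply: eq_bigr => eta _.
rewrite /gen /Rsum big_distrr big_distrl /=; apply: eq_bigr => x _.
rewrite /cw /grad /=; ring.
Qed.

Lemma Dir_S (f : E -> R) : Dir alpha f = - Sf f f.
Proof.
rewrite Dir_ES.
have : ES (fun e => (grad f e) ^ 2) =
   ES (fun e => (f (Tm e).2) ^ 2) + (-1) * ES (fun e => (f e.2) ^ 2) + (-2) * Sf f f.
  rewrite /Sf -!ES_scal -!ES_add; apply: ES_ext => e _; rewrite /grad; move: (f (Tm e).2) (f e.2) => u v; ring.
rewrite (ES_T (fun e => (f e.2) ^ 2)) => ->; field.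
Qed.

Lemma Dir_ge0 (f : E -> R) : 0 <= Dir alpha f.
Proof.
rewrite Dir_ES; apply: Rmult_le_pos; first lra.
have -> : 0 = ES (fun _ => 0) by rewrite /ES big1 // => e _; ring.
apply: ES_le => e _; apply: pow2_ge_0.
Qed.



Section R3.
Local Open Scope R_scope.

Lemma sumR_le (I : Type) (r : seq I) (P : pred I) (F G : I -> R) :
  (forall i, P i -> F i <= G i) ->
  \big[Rplus/0]_(i <- r | P i) F i <= \big[Rplus/0]_(i <- r | P i) G i.
Proof.
move=> h; apply: (big_ind2 (fun u v => u <= v)); [lra | move=> *; lra | exact: h].
Qed.

Lemma sumR_ge0 (I : Type) (r : seq I) (P : pred I) (F : I -> R) :
  (forall i, P i -> 0 <= F i) -> 0 <= \big[Rplus/0]_(i <- r | P i) F i.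
Proof.
move=> h; apply: (big_ind (fun u => 0 <= u)); [lra | move=> *; lra | exact: h].
Qed.

Lemma sumR_recr (n : nat) (F : nat -> R) :
  \big[Rplus/0]_(0 <= k < n.+1) F k = \big[Rplus/0]_(0 <= k < n) F k + F n.
Proof. by rewrite big_nat_recr. Qed.

Lemma div_ge0 (x t : R) : 0 <= x -> 0 < t -> 0 <= x / t.
Proof. move=> hx ht; apply: Rmult_le_pos => //; apply: Rlt_le; apply: Rinv_0_lt_compat; exact: ht. Qed.

Lemma telesc (u : nat -> R) (n : nat) :
  \big[Rplus/0]_(0 <= k < n) (u k.+1 - u k) = u n - u 0%nat.
Proof.
elim: n => [|n IH]; first by rewrite big_geq //; ring.
by rewrite sumR_recr IH; ring.
Qed.

Lemma sum_const (n : nat) (x : R) : \big[Rplus/0]_(0 <= k < n) x = INR n * x.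
Proof.
elim: n => [|n IH]; first by rewrite big_geq //= ; ring.
by rewrite sumR_recr IH S_INR; ring.
Qed.

Lemma sumR_opp (I : Type) (r : seq I) (P : pred I) (F : I -> R) :
  - (\big[Rplus/0]_(i <- r | P i) F i) = \big[Rplus/0]_(i <- r | P i) - F i.
Proof. by rewrite (big_morph Ropp Ropp_plus_distr Ropp_0). Qed.

Lemma sumR_distrr (I : Type) (r : seq I) (P : pred I) (F : I -> R) k :
  k * \big[Rplus/0]_(i <- r | P i) F i = \big[Rplus/0]_(i <- r | P i) (k * F i).
Proof. by rewrite big_distrr. Qed.

Lemma sumR_split (I : Type) (r : seq I) (P : pred I) (F G : I -> R) :
  \big[Rplus/0]_(i <- r | P i) (F i + G i) = \big[Rplus/0]_(i <- r | P i) F i + \big[Rplus/0]_(i <- r | P i) G i.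
Proof. by rewrite big_split. Qed.

Lemma sumR_le_nat (m n : nat) (F G : nat -> R) :
  (forall i, leq m i && leq i.+1 n -> F i <= G i) ->
  \big[Rplus/0]_(m <= i < n) F i <= \big[Rplus/0]_(m <= i < n) G i.
Proof.
move=> h; rewrite big_nat_cond [X in _ <= X]big_nat_cond; apply: sumR_le => i /andP [hi _].
exact: h.
Qed.

Lemma sumR_cat (m k n : nat) (F : nat -> R) : leq m k -> leq k n ->
  \big[Rplus/0]_(m <= i < n) F i = \big[Rplus/0]_(m <= i < k) F i + \big[Rplus/0]_(k <= i < n) F i.
Proof. by move=> h1 h2; rewrite (big_cat_nat h1 h2). Qed.

Lemma sector_seq (a b : nat -> R) (n : nat) (t : R) : 0 < t ->
  - (\big[Rplus/0]_(0 <= k < n) (a k * \big[Rplus/0]_(0 <= j < k) b j))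
  <= (INR n * t * \big[Rplus/0]_(0 <= k < n) a k ^ 2
      + INR n / t * \big[Rplus/0]_(0 <= j < n) b j ^ 2) / 2.
Proof.
move=> ht.
set Q := fun k j => t / 2 * a k ^ 2 + / (2 * t) * b j ^ 2.
have hQ0 : forall k j, 0 <= Q k j.
  move=> k j; rewrite /Q; have := pow2_ge_0 (a k); have := pow2_ge_0 (b j).
  have : 0 < / (2 * t) by apply: Rinv_0_lt_compat; lra.
  nra.
have hQ : forall k j, - (a k * b j) <= Q k j.
  move=> k j; rewrite /Q.
  have : 0 <= (t * a k + b j) ^ 2 / t by apply: div_ge0; [apply: pow2_ge_0 | lra].
  have -> : (t * a k + b j) ^ 2 / t = 2 * (t / 2 * a k ^ 2 + / (2 * t) * b j ^ 2) + 2 * (a k * b j) by field; lra.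
  lra.
have step1 : - (\big[Rplus/0]_(0 <= k < n) (a k * \big[Rplus/0]_(0 <= j < k) b j))
   <= \big[Rplus/0]_(0 <= k < n) \big[Rplus/0]_(0 <= j < n) Q k j.
  rewrite sumR_opp; apply: sumR_le_nat => k /andP [_ hk].
  rewrite sumR_distrr sumR_opp (@sumR_cat 0 k n) //; last exact: ltnW.
  have : 0 <= \big[Rplus/0]_(k <= j < n) Q k j by apply: sumR_ge0 => j _; apply: hQ0.
  have : \big[Rplus/0]_(0 <= j < k) - (a k * b j) <= \big[Rplus/0]_(0 <= j < k) Q k j.
    by apply: sumR_le => j _; apply: hQ.
  lra.
have step2 : \big[Rplus/0]_(0 <= k < n) \big[Rplus/0]_(0 <= j < n) Q k j =
  INR n * (t / 2) * \big[Rplus/0]_(0 <= k < n) a k ^ 2 + INR n * / (2 * t) * \big[Rplus/0]_(0 <= j < n) b j ^ 2.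
  rewrite /Q.
  under eq_bigr => k _ do rewrite sumR_split sum_const -sumR_distrr.
  rewrite sumR_split sum_const -!sumR_distrr; ring.
rewrite step2 in step1.
have -> : (INR n * t * \big[Rplus/0]_(0 <= k < n) a k ^ 2 +
   INR n / t * \big[Rplus/0]_(0 <= j < n) b j ^ 2) / 2 =
   INR n * (t / 2) * \big[Rplus/0]_(0 <= k < n) a k ^ 2 + INR n * / (2 * t) * \big[Rplus/0]_(0 <= j < n) b j ^ 2.
  by field; lra.
exact: step1.
Qed.

End R3.

Lemma sumR_distrl (I : Type) (r : seq I) (P : pred I) (F : I -> R) k :
  \big[Rplus/0]_(i <- r | P i) (F i * k) = (\big[Rplus/0]_(i <- r | P i) F i) * k.
Proof. by rewrite big_distrl. Qed.

Lemma INR_L_pos : 0 < INR L.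
Proof. apply: lt_0_INR; apply/ltP; exact: ltn_trans hL. Qed.

Lemma sector (f h : E -> R) (t : R) : 0 < t ->
  - Sf f h <= INR L * (t * Dir alpha f + Dir alpha h / t).
Proof.
move=> ht.
have eq1 : INR L * Sf f h =
   ES (fun e => \big[Rplus/0]_(0 <= k < L) (grad f (iter k Tm e) * h (iter k Tm e).2)).
  rewrite ES_sum.
  under eq_bigr => k _ do rewrite (ES_iter k (fun e => grad f e * h e.2)).
  by rewrite sum_const.
have eq2 : forall u : E -> R, ES (fun e => \big[Rplus/0]_(0 <= k < L) (grad u (iter k Tm e)) ^ 2)
    = INR L * (2 * Dir alpha u).
  move=> u; rewrite ES_sum.
  under eq_bigr => k _ do rewrite (ES_iter k (fun e => (grad u e) ^ 2)).
  rewrite sum_const Dir_ES; field.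
have pt : forall e, Pe e ->
    -1 * \big[Rplus/0]_(0 <= k < L) (grad f (iter k Tm e) * h (iter k Tm e).2) <=
    (INR L * t / 2) * \big[Rplus/0]_(0 <= k < L) (grad f (iter k Tm e)) ^ 2 +
    (INR L / (2 * t)) * \big[Rplus/0]_(0 <= k < L) (grad h (iter k Tm e)) ^ 2.
  move=> e he.
  have hs : forall k, h (iter k Tm e).2 = h e.2 + \big[Rplus/0]_(0 <= j < k) grad h (iter j Tm e).
    move=> k.
    have T : \big[Rplus/0]_(0 <= j < k) grad h (iter j Tm e) = h (iter k Tm e).2 - h e.2
      := telesc (fun j => h (iter j Tm e).2) k.
    rewrite T; ring.
  have sa : \big[Rplus/0]_(0 <= k < L) grad f (iter k Tm e) = 0.
    have T : \big[Rplus/0]_(0 <= j < L) grad f (iter j Tm e) = f (iter L Tm e).2 - f e.2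
      := telesc (fun j => f (iter j Tm e).2) L.
    by rewrite T iterTmL //; ring.
  under eq_bigr => k _ do rewrite hs Rmult_plus_distr_l.
  rewrite sumR_split sumR_distrl sa Rmult_0_l Rplus_0_l.
  have := sector_seq (fun k => grad f (iter k Tm e)) (fun j => grad h (iter j Tm e)) L ht.
  have -> : (INR L * t / 2) * \big[Rplus/0]_(0 <= k < L) (grad f (iter k Tm e)) ^ 2 +
    (INR L / (2 * t)) * \big[Rplus/0]_(0 <= k < L) (grad h (iter k Tm e)) ^ 2 =
    (INR L * t * \big[Rplus/0]_(0 <= k < L) (grad f (iter k Tm e)) ^ 2 +
     INR L / t * \big[Rplus/0]_(0 <= k < L) (grad h (iter k Tm e)) ^ 2) / 2 by field; lra.
  lra.
have key : -1 * (INR L * Sf f h) <=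
    (INR L * t / 2) * (INR L * (2 * Dir alpha f)) + (INR L / (2 * t)) * (INR L * (2 * Dir alpha h)).
  rewrite eq1 -!eq2 -ES_scal -!ES_scal -ES_add.
  by apply: ES_le.
have hL0 := INR_L_pos.
have : INR L * (- Sf f h) <= INR L * (INR L * (t * Dir alpha f + Dir alpha h / t)).
  have -> : INR L * (INR L * (t * Dir alpha f + Dir alpha h / t)) =
     (INR L * t / 2) * (INR L * (2 * Dir alpha f)) + (INR L / (2 * t)) * (INR L * (2 * Dir alpha h)) by field; lra.
  lra.
by move/(Rmult_le_reg_l _ _ _ hL0).
Qed.



Lemma cap_bound (V F : E -> R) (A B : {set E}) :
  eq_potential alpha A B V ->
  (forall eta, eta \in A -> F eta = 1) -> (forall eta, eta \in B -> F eta = 0) ->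
  Dir alpha V <= 4 * INR L ^ 2 * Dir alpha F.
Proof.
move=> [hVA [hVB hVg]] hFA hFB.
have h0 : Sf V (fun eta => F eta - V eta) = 0.
  rewrite -gen_ES big1 // => eta he.
  case: (boolP (eta \in A)) => ha; first by rewrite hFA // hVA //; ring.
  case: (boolP (eta \in B)) => hb; first by rewrite hFB // hVB //; ring.
  by rewrite hVg //; ring.
have h1 : Sf V (fun eta => F eta - V eta) = Sf V F + -1 * Sf V V.
  rewrite /Sf -ES_scal -ES_add; apply: ES_ext => e _; ring.
have hD : Dir alpha V = - Sf V F by rewrite Dir_S; lra.
have hL0 := INR_L_pos.
have ht : 0 < / (2 * INR L) by apply: Rinv_0_lt_compat; lra.
have := sector V F ht.
rewrite -hD.
have -> : INR L * (/ (2 * INR L) * Dir alpha V + Dir alpha F / / (2 * INR L)) =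
   Dir alpha V / 2 + 2 * INR L ^ 2 * Dir alpha F by field; lra.
lra.
Qed.



Definition lastL : 'I_L := Ordinal (n := L) (m := L.-1) (eq_ind_r is_true (ltn_trans (ltn0Sn 0) hL) (ltn_predL L)).
Definition eta_star : E := [ffun z => if z == lastL then inord N else ord0].
Definition wt (z : 'I_L) : nat := (L.-1 - z)%nat.
Definition mpot (eta : E) : nat := (\sum_(z < L) (eta z : nat) * wt z)%nat.

Lemma mpot_step (eta : E) (z : 'I_L) : inEN eta -> (eta z : nat) != 0%nat -> z != lastL ->
  (mpot (Tm (z, eta)).2 < mpot eta)%nat.
Proof.
move=> he hz hzl.
have hzv : (z < L.-1)%nat.
  have := ltn_ord z; have : ((z : nat) != L.-1) by apply: contraNneq hzl => h; apply/eqP; apply: val_inj.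
  move=> h1 h2; nlia.
have hs : (succ z : nat) = z.+1.
  rewrite /= modn_small //; nlia.
have pw : forall w : 'I_L, ((Defs.sigma z (succ z) eta w : nat) + (w == z) = (eta w : nat) + (w == succ z))%nat.
  move=> w; rewrite sigmaE //.
  have ns := succ_neq hL z.
  have ns2 : z != succ z by rewrite eq_sym.
  case: (eqVneq w z) => [->|wz]; first by rewrite ?eqxx ?(negbTE ns2) /=; nlia.
  by rewrite /=; nlia.
have sumd : forall y : 'I_L, (\sum_(w < L) ((w == y) : nat) * wt w = wt y)%nat.
  move=> y; rewrite (bigD1 y) //= eqxx big1 ?mul1n ?addn0 // => i /negbTE ->; by rewrite mul0n.
have H : (mpot (Tm (z, eta)).2 + wt z = mpot eta + wt (succ z))%nat.
  rewrite /mpot -[in LHS](sumd z) -[in RHS](sumd (succ z)) -!big_split /=.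
  by apply: eq_bigr => w _; rewrite -!mulnDl pw.
move: H; rewrite /wt hs; nlia.
Qed.

Lemma eta_star_eq (eta : E) : inEN eta ->
  (forall z : 'I_L, z != lastL -> (eta z : nat) = 0%nat) -> eta = eta_star.
Proof.
move=> /eqP he h0; apply/ffunP => w; apply: val_inj; rewrite ffunE.
case: (eqVneq w lastL) => [->|wl]; last exact: (h0 w wl).
rewrite /= inordK //.
move: he; rewrite (bigD1 lastL) //= big1 ?addn0 // => i hi; exact: h0.
Qed.

Lemma conn (u : E -> R) : (forall e, Pe e -> u (Tm e).2 = u e.2) ->
  forall eta, inEN eta -> u eta = u eta_star.
Proof.
move=> hu.
suff : forall k (eta : E), (mpot eta <= k)%nat -> inEN eta -> u eta = u eta_star.
  by move=> H eta; apply: (H (mpot eta)).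
elim=> [|k IH] eta hm he.
  case: (pickP (fun z => (z != lastL) && ((eta z : nat) != 0%nat))) => [z /andP [zl hz] | hn].
    by have := mpot_step he hz zl; nlia.
  by rewrite (eta_star_eq he) // => z zl; have := hn z; rewrite zl /= => /negbFE /eqP.
case: (pickP (fun z => (z != lastL) && ((eta z : nat) != 0%nat))) => [z /andP [zl hz] | hn].
  have hP : Pe (z, eta) by rewrite /Pe /= he hz.
  rewrite -(hu _ hP); apply: IH.
    by rewrite -ltnS; exact: leq_trans (mpot_step he hz zl) hm.
  by case/andP: (PTm hP).
by rewrite (eta_star_eq he) // => z zl; have := hn z; rewrite zl /= => /negbFE /eqP.
Qed.



Lemma sumR_bigD1 (I : finType) (j : I) (P : pred I) (F : I -> R) : P j ->
  \big[Rplus/0]_(i | P i) F i = F j + \big[Rplus/0]_(i | P i && (i != j)) F i.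
Proof. by move=> h; rewrite (bigD1 j). Qed.

Lemma ES_eq0 (F : 'I_L * E -> R) : (forall e, Pe e -> 0 <= F e) -> ES F = 0 ->
  forall e, Pe e -> F e = 0.
Proof.
move=> h0 hs e he; move: hs; rewrite /ES (sumR_bigD1 _ he).
have : 0 <= \big[Rplus/0]_(i | Pe i && (i != e)) (cw i * F i).
  apply: sumR_ge0 => i /andP [hi _]; apply: Rmult_le_pos; [apply: c_ge0 | exact: h0].
have := c_pos he; have := h0 e he; move=> h1 h2 h3 h4.
have : cw e * F e = 0 by nra.
case/Rmult_integral => //; lra.
Qed.

Definition inter (A B : {set E}) (eta : E) := [&& inEN eta, eta \notin A & eta \notin B].
Definition Kop (A B : {set E}) (u : E -> R) (eta : E) : R :=
  if inter A B eta then gen alpha u eta else u eta.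

Lemma Kop_inj (A B : {set E}) (u : E -> R) (beta : E) : beta \in B -> inEN beta ->
  (forall eta, Kop A B u eta = 0) -> forall eta, u eta = 0.
Proof.
move=> hbB hbE hK.
have hout : forall eta, ~~ inter A B eta -> u eta = 0.
  by move=> eta hi; have := hK eta; rewrite /Kop (negbTE hi).
have hin : forall eta, inter A B eta -> gen alpha u eta = 0.
  by move=> eta hi; have := hK eta; rewrite /Kop hi.
have hS : Sf u u = 0.
  rewrite -gen_ES big1 // => eta he.
  case: (boolP (inter A B eta)) => hi; first by rewrite hin //; ring.
  by rewrite hout //; ring.
have hES : ES (fun e => (grad u e) ^ 2) = 0.
  have := Dir_S u; rewrite hS Dir_ES; lra.
have hg : forall e, Pe e -> u (Tm e).2 = u e.2.
  move=> e he; have := ES_eq0 (fun e _ => pow2_ge_0 (grad u e)) hES he.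
  rewrite /grad => h; nra.
have hc := conn hg.
have hb : u beta = 0 by apply: hout; apply/negP; case/and3P => _ _; rewrite hbB.
move=> eta; case: (boolP (inEN eta)) => he.
  by rewrite hc // -(hc beta hbE) hb.
by apply: hout; rewrite /inter (negbTE he).
Qed.



Definition delta (z : E) : E -> R := fun w => if w == z then 1 else 0.

Lemma sum_delta (u : E -> R) (w : E) : \big[Rplus/0]_(z : E) (u z * delta z w) = u w.
Proof.
rewrite (@sumR_bigD1 _ w xpredT) // /delta eqxx big1 /=; first ring.
by move=> z /= hz; rewrite eq_sym (negbTE hz); ring.
Qed.

Lemma gen_lin (u : E -> R) (eta : E) :
  gen alpha u eta = \big[Rplus/0]_(z : E) (u z * gen alpha (delta z) eta).
Proof.
rewrite /gen /Rsum.
under [RHS]eq_bigr => z _ do rewrite sumR_distrr.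
rewrite exchange_big /=; apply: eq_bigr => x _.
set y := Defs.sigma x (succ x) eta.
transitivity (g alpha (eta x) * \big[Rplus/0]_(z : E) (u z * delta z y)
   + (- g alpha (eta x)) * \big[Rplus/0]_(z : E) (u z * delta z eta)).
  rewrite !sum_delta; move: (g alpha (eta x)) (u y) (u eta) => p q r; ring.
rewrite !sumR_distrr -sumR_split; apply: eq_bigr => z _.
move: (g alpha (eta x)) (u z) (delta z y) (delta z eta) => p q r s; ring.
Qed.

Lemma Kop_lin (A B : {set E}) (u : E -> R) (eta : E) :
  Kop A B u eta = \big[Rplus/0]_(z : E) (u z * Kop A B (delta z) eta).
Proof.
rewrite /Kop; case: (inter A B eta); first exact: gen_lin.
by rewrite sum_delta.
Qed.

Section Mat.
Local Open Scope ring_scope.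
Definition Mx (A B : {set E}) : 'M[R]_#|E| :=
  \matrix_(i, j) Kop A B (delta (enum_val i)) (enum_val j).
Definition unvec (v : 'rV[R]_#|E|) : E -> R := fun z => v ord0 (enum_rank z).

Lemma mul_Mx (A B : {set E}) (v : 'rV[R]_#|E|) j :
  (v *m Mx A B) ord0 j = Kop A B (unvec v) (enum_val j).
Proof.
rewrite Kop_lin mxE.
transitivity (\sum_i v ord0 i * Kop A B (delta (enum_val i)) (enum_val j)).
  by apply: eq_bigr => i _; rewrite mxE.
rewrite (reindex_onto enum_rank enum_val); last by move=> i _; rewrite enum_valK.
apply: eq_big => [z | z _]; first by rewrite enum_rankK eqxx.
by rewrite enum_rankK.
Qed.




Lemma Mx_unit (A B : {set E}) (beta : E) : beta \in B -> inEN beta -> Mx A B \in unitmx.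
Proof.
move=> hb he.
rewrite -row_free_unit -kermx_eq0; apply/eqP/row_matrixP => i; rewrite row0.
set w := row i (kermx (Mx A B)).
have hw : w *m Mx A B = 0 by rewrite /w -row_mul mulmx_ker row0.
have hu := @Kop_inj A B (unvec w) beta hb he.
clearbody w.
have hK : forall eta, Kop A B (unvec w) eta = 0.
  by move=> eta; rewrite -(enum_rankK eta) -mul_Mx hw mxE.
apply/rowP => k; rewrite !mxE.
have h := hu hK (enum_val k); rewrite /unvec enum_valK in h.
exact: h.
Qed.

Lemma exists_harm (A B : {set E}) (beta : E) : beta \in B -> inEN beta ->
  [disjoint A & B] -> exists V, eq_potential alpha A B V.
Proof.
move=> hb he hAB.
have hM := Mx_unit A hb he.
pose b : 'rV[R]_#|E| := \row_j (if enum_val j \in A then 1 else 0).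
pose v := b *m invmx (Mx A B).
have hv : v *m Mx A B = b by rewrite /v mulmxKV.
have hK : forall eta, Kop A B (unvec v) eta = if eta \in A then 1 else 0.
  move=> eta; have := mul_Mx A B v (enum_rank eta); rewrite enum_rankK hv mxE enum_rankK.
  by move=> <-.
exists (unvec v); split; [|split].
- move=> eta ha; have := hK eta; rewrite ha /Kop /inter ha /= andbF.
  by [].
- move=> eta hbB; have hA : eta \in A = false by apply: (disjointFl hAB).
  have := hK eta; rewrite hA /Kop /inter hbB /= !andbF.
  by [].
- move=> eta hE hnA hnB; have := hK eta; rewrite (negbTE hnA) /Kop /inter hE hnA hnB /=.
  by [].
Qed.

End Mat.
End R2.

Lemma WN_pos (L N : nat) (alpha : R) (A : {set cfg L N}) :
  (forall eta, eta \in A -> inEN eta) -> A != set0 -> (0 < WN L N alpha)%R.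
Proof.
move=> hA /set0Pn [x hx].
rewrite /WN /Rsum (sumR_bigD1 _ (hA _ hx)).
have := weight_pos alpha x.
have : (0 <= \big[Rplus/0]_(i | inEN i && (i != x)) weight alpha i)%R.
  by apply: sumR_ge0 => i _; apply: Rlt_le; apply: weight_pos.
lra.
Qed.

Lemma caps_exists (L N : nat) (alpha : R) (hL : (1 < L)%N) (A B : {set cfg L N})
  (hWN : (0 < WN L N alpha)%R) (hAB : [disjoint A & B]) :
  exists cs, is_Caps alpha A B cs.
Proof.
pose S := fun d => exists F : cfg L N -> R,
            (forall eta, eta \in A -> F eta = 1%R) /\
            (forall eta, eta \in B -> F eta = 0%R) /\ d = Dir alpha F.
pose E' := fun x => S (- x)%R.
have hb : bound E'.
  exists 0%R => x [F [_ [_ hF]]].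
  have := Dir_ge0 hWN F; lra.
have hne : exists x, E' x.
  exists (- Dir alpha (fun eta => if eta \in A then 1 else 0))%R.
  exists (fun eta => if eta \in A then 1 else 0)%R; split; [|split].
  - by move=> eta ->.
  - by move=> eta hb'; rewrite (disjointFl hAB hb').
  - by rewrite Ropp_involutive.
have [m [hm1 hm2]] := completeness E' hb hne.
exists (- m)%R; split.
- move=> d hd; have : E' (- d)%R by rewrite /E' Ropp_involutive.
  move/hm1; lra.
- move=> c' hc'.
  have : (m <= - c')%R.
    apply: hm2 => x hx; have := hc' _ hx; lra.
  lra.
Qed.

Theorem lemma3p2 (L N : nat) (alpha : R)
  (hL : (2 <= L)%N) (hN : (1 <= N)%N) (halpha : (0 < alpha)%R)
  (A B : {set cfg L N})
  (hA : forall eta, eta \in A -> inEN eta)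
  (hB : forall eta, eta \in B -> inEN eta)
  (hA0 : A != set0) (hB0 : B != set0)
  (hAB : [disjoint A & B]) :
  (exists V, eq_potential alpha A B V) /\
  (exists cs, is_Caps alpha A B cs) /\
  (forall c cs, is_Cap alpha A B c -> is_Caps alpha A B cs ->
     (cs <= c)%R /\ (c <= 4 * INR L ^ 2 * cs)%R).
Proof.
have hL' : (1 < L)%N by first [exact: hL | apply/leP; exact: hL].
have hWN := WN_pos alpha hA hA0.
have [beta hbeta] := set0Pn _ hB0.
split; first exact: (exists_harm hL' hWN hbeta (hB _ hbeta) hAB).
split; first exact: (caps_exists hL' hWN hAB).
move=> c cs [V [hV hc]] [hcs1 hcs2].
have hL0 : (0 < INR L)%R by apply: INR_L_pos.
have h4 : (0 < 4 * INR L ^ 2)%R by nra.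
split.
  apply: hcs1; exists V; split; first exact: hV.1.
  by split; [exact: hV.2.1 | exact: hc].
have : (c / (4 * INR L ^ 2) <= cs)%R.
  apply: hcs2 => d [F [hF1 [hF0 ->]]].
  have := cap_bound hL' hWN hV hF1 hF0; rewrite -hc => h.
  apply: (Rmult_le_reg_l (4 * INR L ^ 2)) => //.
  have -> : (4 * INR L ^ 2 * (c / (4 * INR L ^ 2)) = c)%R by field; lra.
  exact: h.
move=> h.
have := Rmult_le_compat_l _ _ _ (Rlt_le _ _ h4) h.
have -> : (4 * INR L ^ 2 * (c / (4 * INR L ^ 2)) = c)%R by field; lra.
done.
Qed.
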